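(* Let $G=(V,E)$ be a finite connected undirected graph with diameter $D$, and let $T\ge 4$ be an integer. Consider any execution of Algorithm FS (described in the context) on $G$ under arbitrary adversarial activations, with rounds numbered so that round $0$ is the first round at whose beginning some node is active. Let $$R = 4D + \Bigl\lfloor \frac{D}{\lfloor T/4\rfloor}\Bigr\rfloor\cdot (T \bmod 4).$$ Then for every round $t\ge R$ all nodes are active and $\delta_t(v)=\delta_t(w)$ for all $v,w\in V$. Moreover, there is a round $t_1$ such that for every $t\ge t_1$, each node $v$ beeps in round $t$ if and only if $\delta_t(v)=0$. In particular $R\le 7D$, so synchronization is reached in $O(D)$ rounds. Each node stores only $\delta(v)$ ($\lceil \log_2 T\rceil$ bits) and $\mathit{State}(v)$, $\mathit{Induced}(v)$ (3 bits in total).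
   Context: Model (beeping model with arbitrary activations). $G=(V,E)$ is a finite connected undirected graph with $n$ nodes and diameter $D$; $N(v)$ is the set of neighbors of $v$. Time proceeds in synchronous rounds. An integer $T\ge 4$ is known to all nodes. In each round, each active node either beeps or listens; a listening node learns only whether at least one of its neighbors beeped in that round (not how many, nor which). Checkpoints: $\mathit{CP}=\{c\in\mathbb{N}_0 : c\equiv 0 \pmod 4 \text{ and } T-c>3\}$, i.e. $\mathit{CP}=\{0,4,\dots,4(\lfloor T/4\rfloor-1)\}$. Algorithm FS. Each node $v$ stores $\delta(v)\in\{0,\dots,T-1\}$, $\mathit{State}(v)\in\{\mathit{Inactive},\mathit{Beep},\mathit{Listen}\}$ and $\mathit{Induced}(v)\in\{\mathit{true},\mathit{false}\}$. Initially all nodes are Inactive (other variables arbitrary). An inactive node does nothing except notice beeps. A node $v$ is \emph{activated in round $t$} if either the adversary chooses to activate it in round $t$, or $v$ is inactive and some neighbor beeps in round $t-1$; in both cases at the beginning of round $t$ it has $\delta(v)=1$, $\mathit{State}(v)=\mathit{Beep}$, $\mathit{Induced}(v)=\mathit{true}$. The adversary may activate any inactive nodes in any rounds. In each round $t$, each active node $v$ acts according to its state at the beginning of the round: (1) If $\mathit{State}(v)=\mathit{Beep}$: $v$ beeps; $\delta(v)\gets\delta(v)+1 \bmod T$; $\mathit{State}(v)\gets\mathit{Listen}$. (2) If $\mathit{State}(v)=\mathit{Listen}$ and at least one neighbor beeps in round $t$: if $\delta(v)\equiv c-1 \pmod T$ for some $c\in\mathit{CP}$, then $\delta(v)\gets\delta(v)+2\bmod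 T$, $\mathit{State}(v)\gets\mathit{Beep}$, $\mathit{Induced}(v)\gets\mathit{true}$ (we say $v$ \emph{gets induced} in round $t$, and each beeping neighbor $w$ \emph{induces} $v$ in round $t$); otherwise $\delta(v)\gets\delta(v)+1\bmod T$. (3) If $\mathit{State}(v)=\mathit{Listen}$ and no neighbor beeps in round $t$: $\delta(v)\gets\delta(v)+1\bmod T$; then, if ($\mathit{Induced}(v)=\mathit{true}$ and the new $\delta(v)\in\mathit{CP}$) or the new $\delta(v)=0$, set $\mathit{State}(v)\gets\mathit{Beep}$ and $\mathit{Induced}(v)\gets\mathit{false}$. Notation: $\delta_t(v)$, $\mathit{State}_t(v)$, $\mathit{Induced}_t(v)$ denote values at the beginning of round $t$. Rounds are numbered so that round $0$ is the first round at whose beginning some node is active. *)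

(* Defs.v *)
From mathcomp Require Import all_boot.
Set Implicit Arguments. Unset Strict Implicit. Unset Printing Implicit Defensive.

(* Graph notions: a simple undirected graph is a symmetric irreflexive
   relation [adj] on a finite type [V]. *)

Fixpoint reach (V : finType) (adj : rel V) (k : nat) (v w : V) : bool :=
  match k with
  | 0 => v == w
  | k'.+1 => reach adj k' v w || [exists u, adj v u && reach adj k' u w]
  end.

Definition connected (V : finType) (adj : rel V) : Prop :=
  forall v w : V, exists k, reach adj k v w.

Definition is_diameter (V : finType) (adj : rel V) (D : nat) : Prop :=
  (forall v w : V, reach adj D v w) /\
  (forall D', (forall v w : V, reach adj D' v w) -> D <= D').

Inductive phase := Beep | Listen.

(* Local state of a node: Inactive, or active with
   delta in {0..T-1}, State in {Beep, Listen}, and Induced. *)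
Inductive nstate :=
  | Inactive
  | Active of nat & phase & bool.

Definition inCP (T c : nat) : bool := (c %% 4 == 0) && (c + 3 < T).

Definition activated : nstate := Active 1 Beep true.

Definition beeps (s : nstate) : bool :=
  if s is Active _ Beep _ then true else false.

Definition delta_of (s : nstate) : option nat :=
  if s is Active d _ _ then Some d else None.

Definition fs_active_step (T : nat) (d : nat) (p : phase) (ind : bool)
    (heard : bool) : nstate :=
  match p with
  | Beep => Active (d.+1 %% T) Listen ind
  | Listen =>
      if heard then
        if has (fun c => inCP T c && (d.+1 == c %[mod T])) (iota 0 T)
        then Active (d.+2 %% T) Beep true
        else Active (d.+1 %% T) Listen ind
      else
        let d' := d.+1 %% T in
        if (ind && inCP T d') || (d' == 0)
        then Active d' Beep false
        else Active d' Listen ind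
  end.

(* Configuration at the beginning of round t, given the adversary's
   activation choices [adv t v] ("adversary activates v in round t";
   only effective on inactive nodes). Round 0 is the first round at whose
   beginning some node is active, so before round 0 all nodes are inactive
   and the nodes active at round 0 are exactly those activated by the
   adversary in round 0. *)
Fixpoint config (V : finType) (adj : rel V) (T : nat)
    (adv : nat -> V -> bool) (t : nat) : V -> nstate :=
  match t with
  | 0 => fun v => if adv 0 v then activated else Inactive
  | t'.+1 => fun v =>
      let c := config adj T adv t' in
      let heard := [exists w, adj v w && beeps (c w)] in
      match c v with
      | Inactive => if heard || adv t'.+1 v then activated else Inactive
      | Active d p ind => fs_active_step T d p ind heard
      end
  end.

Definition is_active (s : nstate) : bool :=
  if s is Inactive then false else true.

(* Main.v *)
Require Import Defs.
From mathcomp Require Import all_boot zify.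
Set Implicit Arguments. Unset Strict Implicit. Unset Printing Implicit Defensive.

Section Arith.
Variable T : nat.
Hypothesis hT : 4 <= T.

Lemma inCP0 : inCP T 0.
Proof. rewrite /inCP; apply/andP; split => //; lia. Qed.

Definition beepok (d : nat) := inCP T d || (0 < d) && inCP T d.-1.

Lemma modS_small x : (x %% T).+1 < T -> x.+1 %% T = (x %% T).+1.
Proof.
move=> h. have Tp : 0 < T by lia.
by rewrite -addn1 -modnDml addn1 modn_small.
Qed.

Lemma modS_big x : (x %% T).+1 = T -> x.+1 %% T = 0.
Proof.
move=> h. by rewrite -addn1 -modnDml addn1 h modnn.
Qed.

Lemma modlt x : x %% T < T.
Proof. apply: ltn_pmod; lia. Qed.

Lemma nobeep1 y : inCP T (y.+1 %% T) -> ~~ beepok (y %% T).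
Proof.
move=> h; rewrite /beepok /inCP.
have := modlt y; set a := y %% T => ha.
case: (ltnP a.+1 T) => h1.
- move: h; rewrite modS_small // /inCP => /andP [h2 h3].
  apply/negP => /orP [/andP [h4 h5] | /andP [h4 /andP [h5 h6]]]; lia.
- have e : a.+1 = T by lia.
  apply/negP => /orP [/andP [h4 h5] | /andP [h4 /andP [h5 h6]]]; lia.
Qed.

Lemma nobeep2 y : inCP T (y.+2 %% T) -> ~~ beepok (y %% T).
Proof.
move=> h; rewrite /beepok /inCP.
have := modlt y; set a := y %% T => ha.
have Tp : 0 < T by lia.
case: (ltnP a.+2 T) => h1.
- move: h; rewrite -addn2 -modnDml addn2 modn_small // /inCP => /andP [h2 h3].
  apply/negP => /orP [/andP [h4 h5] | /andP [h4 /andP [h5 h6]]]; lia.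
- case: (ltnP a.+1 T) => h0.
  + have e : a.+2 = T by lia.
    apply/negP => /orP [/andP [h4 h5] | /andP [h4 /andP [h5 h6]]]; lia.
  + have e : a.+1 = T by lia.
    move: h; rewrite -addn2 -modnDml.
    rewrite (_ : a + 2 = 1 + T); last lia.
    rewrite modnDr modn_small; last lia.
    by rewrite /inCP.
Qed.

Lemma beepok_jump d : inCP T (d.+1 %% T) -> beepok (d.+2 %% T).
Proof.
move=> h. have := h; rewrite /inCP => /andP [h2 h3].
have e : d.+2 %% T = (d.+1 %% T).+1.
  by rewrite -[d.+2]addn1 -modnDml addn1 modn_small //; lia.
by rewrite e /beepok h orbT.
Qed.

Lemma Ksep s s' : inCP T (s %% T) -> inCP T (s' %% T) -> s < s' -> s + 4 <= s'.
Proof.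
move=> h1 h2 lt. rewrite leqNgt; apply/negP => bad.
have Tp : 0 < T by lia.
have : exists k, [/\ 0 < k, k < 4 & s' = s + k] by exists (s' - s); split; lia.
case=> k [k0 k4 e]; subst s'. move: h2; rewrite -modnDml.
move: h1; rewrite /inCP; set a := s %% T => /andP [h3 h4].
rewrite (@modn_small (a + k)); last lia.
move=> /andP [h5 h6]; lia.
Qed.

End Arith.

Section Step.
Variable T : nat.
Hypothesis hT : 4 <= T.

Lemma hasCP d : has (fun c => inCP T c && (d.+1 == c %[mod T])) (iota 0 T) = inCP T (d.+1 %% T).
Proof.
have Tp : 0 < T by lia.
apply/hasP/idP.
- case=> c; rewrite mem_iota => /andP [_ hc] /andP [hcp /eqP e].
  rewrite e modn_small //.
- move=> h; exists (d.+1 %% T).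
   rewrite mem_iota add0n ltn_pmod //.
  rewrite h. rewrite modn_mod. by rewrite eqxx.
Qed.

Definition jumpf d p (h : bool) := if p is Listen then h && inCP T (d.+1 %% T) else false.

Lemma modSmod x : (x %% T).+1 %% T = x.+1 %% T.
Proof. by rewrite -[(x %% T).+1]addn1 -[x.+1]addn1 modnDml. Qed.
Lemma modS2mod x : (x %% T).+2 %% T = x.+2 %% T.
Proof. by rewrite -[(x %% T).+2]addn2 -[x.+2]addn2 modnDml. Qed.

Lemma fs_delta d p i h : exists p' i',
  fs_active_step T d p i h = Active ((d + 1 + jumpf d p h) %% T) p' i'.
Proof.
case: p => /=.
  rewrite addn0 addn1. do 2 eexists; reflexivity.
rewrite hasCP; case: h => /=.
- case: (inCP T _) => /=.
  + rewrite addn1 addn1. do 2 eexists; reflexivity.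
  + rewrite addn0 addn1. do 2 eexists; reflexivity.
- rewrite addn0 addn1; case: ifP => _; do 2 eexists; reflexivity.
Qed.

Lemma fs_jump d p i h : jumpf d p h -> fs_active_step T d p i h = Active (d.+2 %% T) Beep true.
Proof.
case: p => //= /andP [-> h2]. by rewrite hasCP h2.
Qed.

Lemma fs_beepok d p i h d' i' : fs_active_step T d p i h = Active d' Beep i' -> beepok T d'.
Proof.
case: p => //=. rewrite hasCP; case: h.
- case: ifP => hc; last by [].
  case=> <- _. exact: beepok_jump.
- case: ifP => // /orP [/andP [_ hc] | /eqP e] [<- _].
  + by rewrite /beepok hc.
  + by rewrite /beepok e inCP0.
Qed.

Lemma fs_beep_nojump d p i h : fs_active_step T d p i h = Active (d.+1 %% T) Beep false ->
   jumpf d p h = false -> (p = Listen /\ h = false /\ ((i && inCP T (d.+1 %% T)) || (d.+1 %% T == 0))).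
Proof.
case: p => //=. rewrite hasCP; case: h => //=.
- by case: ifP.
- by case: ifP.
Qed.

End Step.

Section FS.
Variables (V : finType) (adj : rel V) (T : nat) (adv : nat -> V -> bool).
Hypothesis adj_sym : symmetric adj.
Hypothesis hT : 4 <= T.
Local Notation cfg := (config adj T adv).

Definition heard t v := [exists w, adj v w && beeps (cfg t w)].
Definition jmp t v := if cfg t v is Active d p _ then jumpf T d p (heard t v) else false.
Fixpoint clk t v := if t is t'.+1 then
   (if cfg t' v is Active _ _ _ then clk t' v + 1 + jmp t' v else 1) else 1.

Lemma cfgA t v d p i : cfg t v = Active d p i -> cfg t.+1 v = fs_active_step T d p i (heard t v).
Proof. by move=> /= ->. Qed.
Lemma cfgI t v : cfg t v = Inactive -> cfg t.+1 v = if heard t v || adv t.+1 v then activated else Inactive.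
Proof. by move=> /= ->. Qed.
Lemma clkA t v d p i : cfg t v = Active d p i -> clk t.+1 v = clk t v + 1 + jumpf T d p (heard t v).
Proof. by move=> /= E; rewrite E /jmp E. Qed.
Lemma clkI t v : cfg t v = Inactive -> clk t.+1 v = 1.
Proof. by move=> /= ->. Qed.

Lemma heardP t v w : adj v w -> beeps (cfg t w) -> heard t v.
Proof. by move=> h1 h2; apply/existsP; exists w; rewrite h1. Qed.

Lemma activeS t v : is_active (cfg t v) -> is_active (cfg t.+1 v).
Proof.
case E: (cfg t v) => [|d p i] // _. rewrite (cfgA E).
by have [p' [i' ->]] := fs_delta hT d p i (heard t v).
Qed.

Definition I1 t := forall v d p i, cfg t v = Active d p i ->
  [/\ d = clk t v %% T, 0 < clk t v <= t.+1, (p = Beep -> beepok T d) & (clk t v = 1 -> p = Beep)].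
Definition I2 t := forall v, is_active (cfg t v) -> 1 < clk t v ->
  forall w, adj v w -> is_active (cfg t w).
Definition I3 t := forall u w, adj u w -> is_active (cfg t u) -> is_active (cfg t w) ->
  clk t u <= (clk t w).+1 \/
  [/\ clk t u = clk t w + 2, beeps (cfg t u) & inCP T ((clk t w).+1 %% T)].

Lemma upper t v d p i : I1 t -> I3 t -> cfg t v = Active d p i -> clk t.+1 v <= t.+2.
Proof.
move=> h1 h3 E. have [ed /andP [c0 ct] _ _] := h1 _ _ _ _ E.
rewrite (clkA E).
case J: (jumpf T d p (heard t v)); last by rewrite addn0 addn1.
have {J} : [/\ p = Listen, heard t v & inCP T (d.+1 %% T)].
  by case: p E J => //= E /andP [-> ->].
case=> ep hv hc.
case: (ltnP (clk t v) t.+1) => lt; first by lia.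
have ec : clk t v = t.+1 by lia.
case/existsP: hv => w /andP [adw bw].
case Ew: (cfg t w) bw => [|dw pw iw] //= bw.
have [edw /andP [cw0 cwt] hbw _] := h1 _ _ _ _ Ew.
have bpw : beepok T dw by apply: hbw; case: pw Ew bw.
have := h3 _ _ adw. rewrite E Ew => /(_ isT isT) [le | [_ bv _]]; last by rewrite ep in bv.
move: hc; rewrite ed modSmod => hc.
case: (ltnP (clk t w) (clk t v)) => lw.
- have e2 : clk t v = (clk t w).+1 by lia.
  move: hc; rewrite e2 => hc.
  by move: (nobeep2 hT hc); rewrite -edw bpw.
- have e2 : clk t v = clk t w by lia.
  move: hc; rewrite e2 => hc.
  by move: (nobeep1 hT hc); rewrite -edw bpw.
Qed.


Lemma I1S t : I1 t -> I3 t -> I1 t.+1.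
Proof.
move=> h1 h3 v d' p' i' E'.
case E: (cfg t v) => [|d p i].
- move: E'; rewrite (cfgI E); case: ifP => _ E'; last by discriminate E'.
  move: E'; rewrite /activated => -[<- <- _]. rewrite (clkI E).
  split; [rewrite modn_small //; lia | lia | | by []].
  by move=> _; apply/orP; right; rewrite (inCP0 hT).
- have [ed /andP [c0 ct] hb h1'] := h1 _ _ _ _ E.
  have up := upper h1 h3 E.
  rewrite (clkA E) in up.
  move: E'; rewrite (cfgA E) => E'.
  have [p2 [i2 E2]] := fs_delta hT d p i (heard t v).
  move: (E'); rewrite E2; case=> ed' ep' ei'.
  rewrite (clkA E). split.
  + by rewrite -ed' ed -addnA modnDml addnA.
  + lia.
  + move=> eb. apply: (fs_beepok hT (d:=d) (p:=p) (i:=i) (h:=heard t v) (i':=i')). by rewrite E' eb.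
  + lia.
Qed.

Lemma I2S t : I1 t -> I2 t -> I2 t.+1.
Proof.
move=> h1 h2 v av c1 w adw.
case E: (cfg t v) => [|d p i].
- by rewrite (clkI E) in c1.
- case Ew: (cfg t w) => [|dw pw iw]; last by apply: activeS; rewrite Ew.
  have [_ /andP[c0 _] _ h1'] := h1 _ _ _ _ E.
  case: (ltnP 1 (clk t v)) => c.
  + have := h2 v; rewrite E => /(_ isT c w adw); by rewrite Ew.
  + have ep : p = Beep by apply: h1'; lia.
    rewrite (cfgI Ew) (@heardP t w v) //; first by rewrite adj_sym.
    by rewrite E ep.
Qed.

Lemma I3S t : I1 t -> I2 t -> I3 t -> I3 t.+1.
Proof.
move=> h1 h2 h3 u w auw au aw.
case Eu: (cfg t u) => [|du pu iu]; case Ew: (cfg t w) => [|dw pw iw].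
- rewrite (clkI Eu) (clkI Ew). by left.
- rewrite (clkI Eu). by left.
- left.
  have [_ /andP[c0 _] _ h1'] := h1 _ _ _ _ Eu.
  case: (ltnP 1 (clk t u)) => c.
  + have := h2 u; rewrite Eu => /(_ isT c w auw); by rewrite Ew.
  + have ep : pu = Beep by apply: h1'; lia.
    rewrite (clkA Eu) (clkI Ew) ep /jumpf. lia.
- have [edu /andP[cu0 _] hbu _] := h1 _ _ _ _ Eu.
  have [edw /andP[cw0 _] hbw _] := h1 _ _ _ _ Ew.
  have := h3 u w auw; rewrite Eu Ew => /(_ isT isT).
  rewrite (clkA Eu) (clkA Ew).
  case Ju: (jumpf T du pu (heard t u)); case Jw: (jumpf T dw pw (heard t w)).
  + move=> [le | [e bu hc]]; first by left; lia.
    exfalso. by case: pu Eu bu Ju hbu.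
  + move=> [le | [e bu hc]].
    * case: (leqP (clk t u + 1 + true) (clk t w + 1 + false).+1) => l; first by left.
      right. have e2 : clk t u = (clk t w).+1 by lia.
      have {Ju} [ep hu hc] : [/\ pu = Listen, heard t u & inCP T (du.+1 %% T)].
        by case: pu Eu Ju hbu => //= _ /andP [-> ->].
      split.
      -- lia.
      -- by rewrite (cfgA Eu) (@fs_jump T hT du pu iu (heard t u)) // ep /jumpf hu hc.
      -- by move: hc; rewrite edu modSmod e2 addn0 addn1.
    * exfalso. by case: pu Eu bu Ju hbu.
  + move=> [le | [e bu hc]]; left; lia.
  + move=> [le | [e bu hc]].
    * left; lia.
    * exfalso. have epu : pu = Beep by case: pu Eu bu hbu Ju.
      case: pw Ew Jw hbw => Ew Jw hbw.
      -- by move: (nobeep1 hT hc); rewrite -edw (hbw erefl).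
      -- have hw : heard t w.
           apply: (@heardP t w u); first by rewrite adj_sym.
           by rewrite Eu epu.
         by move: Jw; rewrite /jumpf hw edw modSmod hc.
Qed.

Lemma Inv0 : [/\ I1 0, I2 0 & I3 0].
Proof.
split.
- move=> v d p i /=; case: (adv 0 v) => E'; last by discriminate E'.
  move: E'; rewrite /activated => -[<- <- _] /=.
  split; [rewrite modn_small //; lia | lia | | by []].
  by move=> _; apply/orP; right; rewrite (inCP0 hT).
- by move=> v _ /=.
- by move=> u w _ _ _; left.
Qed.

Lemma Inv t : [/\ I1 t, I2 t & I3 t].
Proof.
elim: t => [|t [h1 h2 h3]]; first exact: Inv0.
split; [exact: I1S | exact: I2S | exact: I3S].
Qed.

End FS.

Lemma fs_listen T d i h : 4 <= T -> fs_active_step T d Listen i h =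
  if h then (if inCP T (d.+1 %% T) then Active (d.+2 %% T) Beep true else Active (d.+1 %% T) Listen i)
  else (if (i && inCP T (d.+1 %% T)) || (d.+1 %% T == 0) then Active (d.+1 %% T) Beep false
        else Active (d.+1 %% T) Listen i).
Proof. by move=> hT /=; rewrite hasCP. Qed.

Section Live.
Variables (V : finType) (adj : rel V) (T : nat) (adv : nat -> V -> bool).
Hypothesis adj_sym : symmetric adj.
Hypothesis hT : 4 <= T.
Local Notation cfg := (config adj T adv).
Local Notation clk := (clk adj T adv).
Local Notation heard := (heard adj T adv).

Definition isK s := inCP T (s %% T).
Definition synced t v := is_active (cfg t v) && (clk t v == t.+1).
Definition fresh s v := exists d, cfg s v = Active d Beep true /\ clk s v = s.+1.

Lemma I1t t : I1 adj T adv t.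
Proof. by case: (Inv adv adj_sym hT t). Qed.
Lemma I2t t : I2 adj T adv t.
Proof. by case: (Inv adv adj_sym hT t). Qed.
Lemma I3t t : I3 adj T adv t.
Proof. by case: (Inv adv adj_sym hT t). Qed.

Lemma clk_le t v : is_active (cfg t v) -> 0 < clk t v <= t.+1.
Proof.
case E: (cfg t v) => [|d p i] // _.
by have [_ h _ _] := I1t E.
Qed.

Lemma mono t v : is_active (cfg t v) -> is_active (cfg t.+1 v) /\ (clk t v).+1 <= clk t.+1 v.
Proof.
move=> a; split; first exact: activeS.
case E: (cfg t v) a => [|d p i] // _.
rewrite (clkA E); lia.
Qed.

Lemma mono_le t t' v : t <= t' -> is_active (cfg t v) ->
  is_active (cfg t' v) /\ clk t v + (t' - t) <= clk t' v.
Proof.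
move=> le a; elim: t' le => [|t' IH] le.
- have e : t = 0 by lia. subst t. by rewrite subnn addn0.
- case: (ltnP t t'.+1) => l.
  + have [a' c'] := IH l. have [a2 c2] := mono a'. split => //. lia.
  + have e : t = t'.+1 by lia. subst t. by rewrite subnn addn0.
Qed.

Lemma sync_le t t' v : t <= t' -> synced t v -> synced t' v.
Proof.
move=> le /andP [a /eqP c]. have [a' c'] := mono_le le a.
have := clk_le a'. rewrite /synced a' /=. move=> h; apply/eqP; lia.
Qed.

Lemma freshF t v : synced t v -> exists2 s, s <= t & isK s /\ fresh s v.
Proof.
elim: t v => [|t IH] v.
- have k0 : isK 0 by rewrite /isK mod0n inCP0.
  rewrite /synced /=. case A: (adv 0 v) => // _. exists 0 => //. split => //.
  by exists 1; rewrite /= A.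
- move=> /andP [a /eqP c].
  case E: (cfg t v) => [|d p i].
  + by rewrite (clkI E) in c.
  + have [ed /andP [c0 ct] _ _] := I1t E.
    move: (c); rewrite (clkA E).
    case J: (jumpf T d p (heard t v)) => c'.
    * have {J} [ep hu hc] : [/\ p = Listen, heard t v & inCP T (d.+1 %% T)].
        by case: p E J => //= _ /andP [-> ->].
      exists t.+1 => //. split.
      -- have e : clk t v = t by lia.
         by move: hc; rewrite /isK ed modSmod e.
      -- exists (d.+2 %% T); split => //.
         rewrite (cfgA E) (@fs_jump T hT d p i (heard t v)) //.
         by rewrite ep /jumpf hu hc.
    * have st : synced t v by rewrite /synced E /=; apply/eqP; lia.
      have [s h1 h2] := IH v st.
      exists s => //. lia.
Qed.

Section Propag.
Variables (s s' : nat) (v w : V).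
Hypotheses (Ks : isK s) (Ks' : isK s') (lt : s < s')
  (btw : forall x, s < x -> x < s' -> ~~ isK x) (fv : fresh s v) (avw : adj v w).

Lemma s4 : s + 4 <= s'.
Proof. exact: (Ksep hT Ks Ks' lt). Qed.

Lemma sv : synced s v.
Proof. case: fv => d [E c]. by rewrite /synced E c eqxx. Qed.

Lemma traj t : s < t -> t < s' -> (t.+1 < s' -> exists d, cfg t v = Active d Listen true)
   /\ (t.+1 = s' -> beeps (cfg t v)).
Proof.
have h4 := s4.
elim: t => [|t IH] // l1 l2.
case: (ltnP s t) => l3.
- have [IH1 _] := IH l3 (ltnW l2).
  have [d E] := IH1 l2.
  have syt : synced t v by apply: (sync_le _ sv); lia.
  have syt1 : synced t.+1 v by apply: (sync_le _ sv); lia.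
  move: syt syt1 => /andP [_ /eqP c] /andP [_ /eqP c1].
  have [ed _ _ _] := I1t E.
  move: c1; rewrite (clkA E) c /jumpf => c1.
  rewrite (cfgA E) fs_listen //.
  have hd : d.+1 %% T = t.+2 %% T by rewrite ed c modSmod.
  case H: (heard t v) c1 => /= c1.
  + have hc : inCP T (d.+1 %% T) = false by case: (inCP T _) c1 => //= c1; lia.
    rewrite hc. split; first by eauto.
    move=> e. move: Ks'. by rewrite /isK -e -hd hc.
  + split.
    * move=> l4. have := btw (_ : s < t.+2) l4. rewrite /isK -hd => nk.
      have {}nk : ~~ inCP T (d.+1 %% T) by apply: nk; lia.
      rewrite (negbTE nk) /=.
      case: eqP => [e0|_]; last by eauto.
      by move: nk; rewrite e0 inCP0.
    * move=> e. move: Ks'; rewrite /isK -e -hd => ->. by [].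
- have e : t = s by lia. subst t.
  case: fv => d [E c].
  rewrite (cfgA E) /=. split; last by lia.
  by eauto.
Qed.

Lemma propag : synced s' w.
Proof.
have h4 := s4.
have sv' := sv.
have H1 : is_active (cfg s.+1 w) /\ s.+1 <= clk s.+1 w.
  case: fv => d [E c].
  case Ew: (cfg s w) => [|dw pw iw].
  - have s0 : s = 0.
      case: (posnP s) => // sp.
      have av : is_active (cfg s v) by rewrite E.
      have c2 : 1 < clk s v by rewrite c; lia.
      have := @I2t s v av c2 w avw. by rewrite Ew.
    subst s.
    have hw : heard 0 w.
      apply: (@heardP V adj T adv 0 w v); first by rewrite adj_sym.
      by rewrite E.
    by rewrite (cfgI Ew) hw (clkI Ew).
  - have [edw /andP [cw0 cwt] hbw _] := I1t Ew.
    have av : is_active (cfg s v) by rewrite E.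
    have aw : is_active (cfg s w) by rewrite Ew.
    have := @I3t s v w avw av aw. move=> [le | [e bu hc]].
    + have [a2 c2] := mono aw. split => //. lia.
    + split; first exact: (activeS hT aw).
      case: pw Ew hbw => Ew hbw.
      * by move: (nobeep1 hT hc); rewrite -edw (hbw erefl).
      * have hw : heard s w.
          apply: (@heardP V adj T adv s w v); first by rewrite adj_sym.
          by rewrite E.
        rewrite (clkA Ew) /jumpf hw edw modSmod hc /=. lia.
have [a1 c1] := H1.
have l8 : s.+1 <= s'.-1 by lia.
have [a2 c2] := mono_le l8 a1.
have := clk_le a2 => /andP [_ c3].
have es : s' = (s'.-1).+1 by lia.
case: (ltnP (clk s'.-1 w) s') => c4.
- case Ew: (cfg s'.-1 w) a2 => [|dw pw iw] // _.
  have [edw _ hbw _] := I1t Ew.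
  have ec : clk s'.-1 w = s'.-1 by lia.
  have hc : inCP T ((s'.-1).+1 %% T) by rewrite -es.
  case: pw Ew hbw => Ew hbw.
  + by move: (nobeep1 hT hc); rewrite -ec -edw (hbw erefl).
  + have l5 : s < s'.-1 by lia.
    have l6 : s'.-1 < s' by lia.
    have hw : heard s'.-1 w.
      apply: (@heardP V adj T adv s'.-1 w v); first by rewrite adj_sym.
      have [_ tb] := traj l5 l6. by apply: tb.
    have aw : is_active (cfg s'.-1 w) by rewrite Ew.
    have aw1 := activeS hT aw.
    rewrite /synced es aw1.
    rewrite (clkA Ew) /jumpf hw edw modSmod ec hc /=. apply/eqP; lia.
- have l7 : s'.-1 <= s' by lia.
  apply: (sync_le l7).
  by rewrite /synced a2; apply/eqP; lia.
Qed.

End Propag.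

End Live.

Section Kap.
Variable T : nat.
Hypothesis hT : 4 <= T.
Definition kap k := (k %/ (T %/ 4)) * T + 4 * (k %% (T %/ 4)).

Lemma m_pos : 0 < T %/ 4.
Proof. by rewrite divn_gt0. Qed.

Lemma m_le : 4 * (T %/ 4) <= T.
Proof. by rewrite mulnC leq_divM. Qed.

Lemma kapK k : isK T (kap k).
Proof.
rewrite /isK /kap. have mp := m_pos. have ml := m_le.
have r := ltn_pmod k mp.
set m := T %/ 4 in mp ml r *. set r' := k %% m in r *.
rewrite modnMDl modn_small; last lia.
rewrite /inCP; apply/andP; split; last lia.
by rewrite modnMr.
Qed.

Lemma kap_lt k : kap k < kap k.+1.
Proof.
rewrite /kap. have mp := m_pos. have ml := m_le.
set m := T %/ 4 in mp ml *.
have ek := divn_eq k m. have r := ltn_pmod k mp.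
set q := k %/ m in ek *. set r' := k %% m in ek r *.
case: (ltnP r'.+1 m) => h.
- have e1 : k.+1 = q * m + r'.+1 by lia.
  rewrite e1 divnMDl // modnMDl (divn_small h) (modn_small h) addn0. lia.
- have e1 : k.+1 = q.+1 * m by rewrite mulSn; lia.
  rewrite e1 mulnK // modnMl. rewrite mulSn. nia.
Qed.

Lemma kap0 : kap 0 = 0.
Proof. by rewrite /kap div0n mod0n. Qed.

Lemma kapR D : kap D = 4 * D + (D %/ (T %/ 4)) * (T %% 4).
Proof.
rewrite /kap. have mp := m_pos.
set m := T %/ 4 in mp *.
have eT : T = m * 4 + T %% 4 by rewrite /m -divn_eq.
have eD := divn_eq D m.
set q := D %/ m in eD *. set r := D %% m in eD *.
set x := T %% 4 in eT *.
rewrite {1}eT eD. nia.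
Qed.

End Kap.

Section Global.
Variables (V : finType) (adj : rel V) (T : nat) (adv : nat -> V -> bool).
Hypothesis adj_sym : symmetric adj.
Hypothesis hT : 4 <= T.
Local Notation cfg := (config adj T adv).
Local Notation clk := (clk adj T adv).
Local Notation heard := (heard adj T adv).
Local Notation synced := (synced adj T adv).

Lemma Gk k : forall w, (exists2 o, adv 0 o & reach adj k w o) -> synced (kap T k) w.
Proof.
elim: k => [|k IH] w [o ao r].
- move: r => /= /eqP ->. rewrite kap0 /synced /= ao. by [].
- move: r => /= /orP [r | /existsP [u /andP [awu r]]].
  + apply: (sync_le adj_sym hT (ltnW (kap_lt hT k))). apply: IH; by exists o.
  + have su : synced (kap T k) u by apply: IH; exists o.
    have [s ls [Ks fs]] := freshF adj_sym hT su.
    have ex : exists x, (s < x) && isK T x.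
      exists (kap T k.+1). rewrite kapK // andbT.
      have := kap_lt hT k. lia.
    case: (ex_minnP ex) => s' /andP [l1 K1] mn.
    have btw : forall x, s < x -> x < s' -> ~~ isK T x.
      move=> x l2 l3; apply/negP => kx.
      have := mn x; rewrite l2 kx => /(_ isT). lia.
    have le : s' <= kap T k.+1.
      apply: mn. rewrite kapK // andbT. have := kap_lt hT k. lia.
    apply: (sync_le adj_sym hT le).
    apply: (propag adj_sym hT Ks K1 l1 btw fs). by rewrite adj_sym.
Qed.

End Global.

Section Tail.
Variables (V : finType) (adj : rel V) (T : nat) (adv : nat -> V -> bool).
Hypothesis adj_sym : symmetric adj.
Hypothesis hT : 4 <= T.
Local Notation cfg := (config adj T adv).
Local Notation clk := (clk adj T adv).
Local Notation heard := (heard adj T adv).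
Local Notation synced := (synced adj T adv).
Variable R : nat.
Hypothesis HR : forall t v, R <= t -> synced t v.

Lemma deltaR t v d p i : R <= t -> cfg t v = Active d p i -> d = t.+1 %% T.
Proof.
move=> l E. have := HR v l => /andP [_ /eqP c].
have [ed _ _ _] := I1t adj_sym hT E. by rewrite ed c.
Qed.

Lemma nojump t v d p i : R <= t -> cfg t v = Active d p i -> jumpf T d p (heard t v) = false.
Proof.
move=> l E. have := HR v l => /andP [_ /eqP c].
have l1 : R <= t.+1 by lia.
have := HR v l1 => /andP [_ /eqP c1].
move: c1; rewrite (clkA E) c. case: (jumpf _ _ _ _) => //= ; lia.
Qed.

Lemma ind_keep t v d p : R <= t -> cfg t v = Active d p false ->
  exists d' p', cfg t.+1 v = Active d' p' false.
Proof.
move=> l E. have nj := nojump l E.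
rewrite (cfgA E). case: p E nj => E nj /=.
- by eauto.
- rewrite hasCP //. move: nj; rewrite /jumpf.
  case: (heard t v) => /= nj; first by rewrite nj; eauto.
  case: ifP => _; by eauto.
Qed.

Lemma ind_zero t v : R <= t -> t.+2 %% T = 0 -> exists d' p', cfg t.+1 v = Active d' p' false.
Proof.
move=> l e. have := HR v l => /andP [a /eqP c].
case E: (cfg t v) a => [|d p i] // _.
have ed := deltaR l E. have nj := nojump l E.
have hd : d.+1 %% T = 0 by rewrite ed modSmod.
have [_ _ hb _] := I1t adj_sym hT E.
rewrite (cfgA E). case: p E nj hb => E nj hb.
- exfalso. have h0 : inCP T (t.+2 %% T) by rewrite e inCP0.
  by move: (nobeep1 hT h0); rewrite -ed (hb erefl).
- rewrite fs_listen //. move: nj; rewrite /jumpf hd (inCP0 hT).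
  case: (heard t v) => //= _. rewrite eqxx orbT. by eauto.
Qed.

Lemma ind_from a v : R <= a -> (exists d p, cfg a v = Active d p false) ->
  forall n, exists d p, cfg (a + n) v = Active d p false.
Proof.
move=> l h; elim=> [|n [d [p IH]]]; first by rewrite addn0.
rewrite addnS. apply: (ind_keep (d:=d) (p:=p)) => //. lia.
Qed.

Lemma ind_false t v : R + T <= t -> exists d p, cfg t v = Active d p false.
Proof.
move=> l. have Tp : 0 < T by lia.
have r := ltn_pmod t.+1 Tp.
have ed := divn_eq t.+1 T.
set y := t.+1 %/ T * T in ed *.
set rr := t.+1 %% T in r ed *.
have ly : R + 2 <= y by lia.
have z : (y - 2).+2 %% T = 0.
  rewrite (_ : (y - 2).+2 = y); last lia.
  by rewrite /y modnMl.
have l2 : R <= y - 2 by lia.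
have [d [p E]] := @ind_zero (y - 2) v l2 z.
have l3 : R <= (y - 2).+1 by lia.
have := @ind_from (y - 2).+1 v l3 (ex_intro _ d (ex_intro _ p E)) (t - (y - 2).+1).
by rewrite (_ : (y - 2).+1 + (t - (y - 2).+1) = t) //; lia.
Qed.

Lemma beep_iff t v : R + T + 1 <= t ->
  beeps (cfg t v) <-> delta_of (cfg t v) = Some 0.
Proof.
case: t => [|t] l; first lia.
have l0 : R + T <= t by lia.
have [d [p E]] := @ind_false t v l0.
have lR : R <= t by lia.
have ed := deltaR lR E. have nj := nojump lR E.
have [_ _ hb _] := I1t adj_sym hT E.
rewrite (cfgA E). case: p E nj hb => E nj hb.
- rewrite /=. split => // [[e]].
  have h0 : inCP T (t.+2 %% T) by rewrite -modSmod -ed e inCP0.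
  by move: (nobeep1 hT h0); rewrite -ed (hb erefl).
- rewrite fs_listen //. move: nj; rewrite /jumpf.
  case: (heard t v) => /= nj.
  + rewrite nj /=. split => // [[e]]. by move: nj; rewrite e inCP0.
  + case: eqP => [->|ne] /=; first by [].
    split => // [[e]]. by [].
Qed.

End Tail.

Unset Implicit Arguments. Set Strict Implicit.

Theorem theorem1 (V : finType) (adj : rel V)
  (adj_sym : symmetric adj) (adj_irr : irreflexive adj)
  (D T : nat) (hconn : connected adj) (hdiam : is_diameter adj D)
  (hT : 4 <= T)
  (adv : nat -> V -> bool) (hstart : exists v, adv 0 v) :
  let R := 4 * D + (D %/ (T %/ 4)) * (T %% 4) in
  (forall t, R <= t ->
     (forall v, is_active (config adj T adv t v)) /\
     (forall v w, delta_of (config adj T adv t v) =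
                  delta_of (config adj T adv t w))) /\
  (exists t1, forall t, t1 <= t -> forall v,
     beeps (config adj T adv t v) <-> delta_of (config adj T adv t v) = Some 0) /\
  R <= 7 * D.
Proof.
move=> R.
have kR : kap T D = R by rewrite kapR.
have syncR : forall t v, R <= t -> synced adj T adv t v.
  move=> t v l. case: hstart => o ao.
  have s0 : synced adj T adv (kap T D) v.
    apply: (Gk adj_sym hT). exists o => //. exact: (proj1 hdiam v o).
  rewrite kR in s0. exact: (sync_le adj_sym hT l s0).
split; [|split].
- move=> t l. split.
  + move=> v; by have /andP [] := syncR t v l.
  + move=> v w.
    have key : forall x, delta_of (config adj T adv t x) = Some (t.+1 %% T).
      move=> x. have := syncR t x l => /andP [a /eqP c].
      case E: (config adj T adv t x) a => [|d p i] // _.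
      have [ed _ _ _] := I1t adj_sym hT E. by rewrite /= ed c.
    by rewrite !key.
- exists (R + T + 1) => t l v. exact: (beep_iff adj_sym hT syncR).
- rewrite /R.
  have h1 : D %/ (T %/ 4) <= D := leq_div _ _.
  have h2 : T %% 4 <= 3 by have := ltn_pmod T (isT : 0 < 4); lia.
  have := leq_mul h1 h2. lia.
Qed.
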